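(* Let $\rho>0$. There is a constant $C>0$ such that for every $\varepsilon>0$ and every $\xi\in\mathbb{H}^N$ with $|\xi|>\rho$, $$|\nabla_{\mathbb{H}}u_\varepsilon(\xi)|\le C\varepsilon^{\frac{Q-2s}{2}}.$$
   Context: $\mathbb{H}^N=\mathbb{R}^{2N+1}$ with group law $\xi\circ\xi'=(x+x',y+y',t+t'+2(x'\cdot y-y'\cdot x))$, $Q=2N+2$, dilations $\delta_a(x,y,t)=(ax,ay,a^2t)$, homogeneous norm $|\xi|=((|x|^2+|y|^2)^2+t^2)^{1/4}$, balls $B_r(0)=\{|\xi|<r\}$, $s\in(0,1)$, $Q^*_s=\frac{2Q}{Q-2s}$. The horizontal gradient is $\nabla_{\mathbb{H}}u=(X_1u,\dots,X_Nu,Y_1u,\dots,Y_Nu)$ with $X_j=\partial_{x_j}+2y_j\partial_t$, $Y_j=\partial_{y_j}-2x_j\partial_t$. $S_s>0$ is the sharp fractional Sobolev constant on $\mathbb{H}^N$. $U(x,y,t)=C_0(t^2+(1+|x|^2+|y|^2)^2)^{-\frac{Q-2s}{4}}$ ($C_0>0$), $\overline{u}=U/\|U\|_{L^{Q^*_s}(\mathbb{H}^N)}$, $u^*(\xi)=\overline{u}(\delta_{S_s^{-1/(2s)}}(\xi))$, $U_\varepsilon(\xi)=\varepsilon^{-\frac{Q-2s}{2}}u^*(\delta_{1/\varepsilon}(\xi))$. $\Omega\subseteq\mathbb{H}^N$ is bounded open, $r>0$ with $B_{4r}(0)\subset\Omega$, $\phi\in C^\infty(\mathbb{H}^N)$,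 $0\le\phi\le1$, $\phi=1$ on $B_r(0)$, $\phi=0$ outside $B_{2r}(0)$, and $u_\varepsilon=U_\varepsilon\phi$. *)

(* Defs.v *)
From HB Require Import structures.
From mathcomp Require Import all_boot all_order all_algebra.
From mathcomp Require Import all_classical all_reals all_analysis.
Set Implicit Arguments. Unset Strict Implicit. Unset Printing Implicit Defensive.
Import Order.TTheory GRing.Theory Num.Theory.
Import numFieldNormedType.Exports.
Local Open Scope classical_set_scope.
Local Open Scope ring_scope.

Section Heisenberg.
Variables (R : realType) (N : nat).

Definition Heis : Type := ('rV[R]_N * 'rV[R]_N * R^o)%type.

Definition hx (p : Heis) : 'rV[R]_N := p.1.1.
Definition hy (p : Heis) : 'rV[R]_N := p.1.2.
Definition ht (p : Heis) : R := p.2.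

Definition sqn (x : 'rV[R]_N) : R := \sum_(i < N) (x 0 i) ^+ 2.

Definition Qdim : R := (2 * N + 2)%:R.

Definition hnorm (p : Heis) : R :=
  ((sqn (hx p) + sqn (hy p)) ^+ 2 + (ht p) ^+ 2) `^ (4%:R^-1).

Definition dil (a : R) (p : Heis) : Heis :=
  ((a *: hx p, a *: hy p), a ^+ 2 * ht p).

Definition erow (j : 'I_N) : 'rV[R]_N := \row_(i < N) (i == j)%:R.
Definition dirx (j : 'I_N) : Heis := ((erow j, 0), 0).
Definition diry (j : 'I_N) : Heis := ((0, erow j), 0).
Definition dirt : Heis := ((0, 0), 1).

Definition Xf (j : 'I_N) (u : Heis -> R^o) (p : Heis) : R :=
  'D_(dirx j) u p + 2 * (hy p 0 j) * 'D_dirt u p.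
Definition Yf (j : 'I_N) (u : Heis -> R^o) (p : Heis) : R :=
  'D_(diry j) u p - 2 * (hx p 0 j) * 'D_dirt u p.

Definition hgrad_norm (u : Heis -> R^o) (p : Heis) : R :=
  Num.sqrt (\sum_(j < N) ((Xf j u p) ^+ 2 + (Yf j u p) ^+ 2)).

Fixpoint Ck (k : nat) (f : Heis -> R^o) : Prop :=
  match k with
  | 0 => continuous f
  | k.+1 => (forall p, differentiable f p) /\ (forall v : Heis, Ck k (fun p => 'D_v f p))
  end.
Definition smooth (f : Heis -> R^o) : Prop := forall k, Ck k f.

Definition hball (r : R) : set Heis := [set p | hnorm p < r].

Definition Ububble (s C0 : R) (p : Heis) : R :=
  C0 * ((ht p) ^+ 2 + (1 + sqn (hx p) + sqn (hy p)) ^+ 2) `^ (- ((Qdim - 2 * s) / 4%:R)).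

(* ubar = U / ||U||_{L^{Q*_s}}; the norm is passed as the parameter normU *)
Definition ubar (s C0 normU : R) (p : Heis) : R := Ububble s C0 p / normU.

Definition ustar (s C0 normU S : R) (p : Heis) : R :=
  ubar s C0 normU (dil (S `^ (- (2 * s)^-1)) p).

Definition Ueps (s C0 normU S eps : R) (p : Heis) : R :=
  eps `^ (- ((Qdim - 2 * s) / 2)) * ustar s C0 normU S (dil eps^-1 p).

Definition ueps (s C0 normU S eps : R) (phi : Heis -> R) : Heis -> R^o :=
  fun p => Ueps s C0 normU S eps p * phi p.

End Heisenberg.

(* Main.v *)
Require Import Defs.
From HB Require Import structures.
From mathcomp Require Import all_boot all_order all_algebra.
From mathcomp Require Import all_classical all_reals all_analysis.
From mathcomp Require Import ring lra.
Import Order.TTheory GRing.Theory Num.Theory.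
Import numFieldNormedType.Exports.
Local Open Scope classical_set_scope.
Local Open Scope ring_scope.

Section S.
Variables (R : realType) (N : nat).
Local Notation H := (Heis R N).

Lemma quot_eq (f : H -> R^o) (p v : H) :
  (fun h : R => h^-1 *: ((f \o shift p) (h *: v) - f p)) =
  (fun h : R^o => h^-1 *: (((fun h : R^o => f (h *: v + p)) \o shift 0) (h *: 1)
     - (fun h : R^o => f (h *: v + p)) 0)).
Proof.
apply/funext => h /=.
by rewrite /shift /= addr0 scale0r add0r -[h%:A]/(h * 1) mulr1.
Qed.

Lemma Dline (f : H -> R^o) (p v : H) :
  'D_v f p = 'D_1 (fun h : R^o => f (h *: v + p)) 0.
Proof. by rewrite /derive quot_eq. Qed.

Lemma Dline_der (f : H -> R^o) (p v : H) :
  derivable f p v = derivable (fun h : R^o => f (h *: v + p)) 0 1.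
Proof. by rewrite /derivable quot_eq. Qed.

Lemma line_eq (p v : H) (h : R) : h *: v + p =
  ((h *: hx v + hx p, h *: hy v + hy p), h * ht v + ht p).
Proof. by case: p => [[x y] t]; case: v => [[a b] c]. Qed.

Definition dotv (x e : 'rV[R]_N) : R := \sum_(i < N) x 0 i * e 0 i.

Lemma sqn_line (x e : 'rV[R]_N) (h : R) :
  sqn (h *: e + x) = sqn x + 2 * h * dotv x e + h ^+ 2 * sqn e.
Proof.
rewrite /sqn /dotv mulr_sumr mulr_sumr -!big_split /=; apply: eq_bigr => i _.
rewrite !mxE; ring.
Qed.

Lemma sqn_ge0 (x : 'rV[R]_N) : 0 <= sqn x.
Proof. by rewrite /sqn; apply: sumr_ge0 => i _; rewrite sqr_ge0. Qed.

Lemma sqn_coord (x : 'rV[R]_N) j : (x 0 j) ^+ 2 <= sqn x.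
Proof.
rewrite /sqn (bigD1 j) //= lerDl; apply: sumr_ge0 => i _; exact: sqr_ge0.
Qed.

Lemma dotv_erow (x : 'rV[R]_N) j : dotv x (erow R j) = x 0 j.
Proof.
rewrite /dotv (bigD1 j) //= big1 ?addr0 /erow ?mxE ?eqxx ?mulr1 //.
by move=> i /negbTE ij; rewrite mxE ij mulr0.
Qed.

Lemma dotv0 (x : 'rV[R]_N) : dotv x 0 = 0.
Proof. by rewrite /dotv big1 // => i _; rewrite mxE mulr0. Qed.

Lemma sqn0 : sqn (0 : 'rV[R]_N) = 0.
Proof. by rewrite /sqn big1 // => i _; rewrite mxE expr0n. Qed.

Lemma L1 (c k : R) (P : {poly R}) : 0 < P.[0] ->
  derivable (fun h : R^o => (c * (P.[h]) `^ k : R^o)) 0 1 /\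
  'D_1 (fun h : R^o => (c * (P.[h]) `^ k : R^o)) 0 =
     c * (k * (P.[0]) `^ (k - 1) * (P^`()).[0]).
Proof.
move=> P0.
have dP : derivable (horner P : R^o -> R^o) 0 1 by exact: derivable_horner.
have dg : derivable (@powR R ^~ k : R^o -> R^o) (P.[0]) 1.
  by apply: (@derivable_powR R 1 k); rewrite in_itv /= andbT.
have dc : derivable ((@powR R ^~ k) \o horner P : R^o -> R^o) 0 1.
  apply/derivable1_diffP; apply: differentiable_comp; exact/derivable1_diffP.
have -> : (fun h : R^o => (c * (P.[h]) `^ k : R^o)) = c \*o ((@powR R ^~ k) \o horner P).
  by apply/funext => h.
split; first exact: (derivableM (derivable_cst (c : R^o) (0 : R^o) 1) dc).
rewrite (deriveMl _ dc) -derive1E (derive1_comp dP dg).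
rewrite powR_derive1 ?in_itv /= ?andbT //.
by rewrite -derivE mulrA.
Qed.


Lemma sqnZ (c : R) (x : 'rV[R]_N) : sqn (c *: x) = c ^+ 2 * sqn x.
Proof.
have d0 : dotv 0 x = 0 by rewrite /dotv big1 // => i _; rewrite mxE mul0r.
by rewrite -[c *: x]addr0 sqn_line sqn0 d0; ring.
Qed.

Lemma cont_hx i : continuous (fun q : H => hx q 0 i).
Proof.
move=> q; apply: (@continuous_comp _ _ _ (fun q : H => hx q) (fun m : 'rV[R]_N => m 0 i)).
  apply: (@continuous_comp _ _ _ (fun q : H => q.1) (fun m => m.1)); exact: cvg_fst.
exact: coord_continuous.
Qed.
Lemma cont_hy i : continuous (fun q : H => hy q 0 i).
Proof.
move=> q; apply: (@continuous_comp _ _ _ (fun q : H => hy q) (fun m : 'rV[R]_N => m 0 i)).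
  apply: (@continuous_comp _ _ _ (fun q : H => q.1) (fun m => m.2)); [exact: cvg_fst|exact: cvg_snd].
exact: coord_continuous.
Qed.
Lemma cont_ht : continuous (fun q : H => ht q).
Proof. move=> q; exact: cvg_snd. Qed.

Definition Box (M : R) : set H := [set q | (forall i, `|hx q 0 i| <= M) /\
   (forall i, `|hy q 0 i| <= M) /\ `|ht q| <= M].

Lemma Box_compact M : compact (Box M).
Proof.
set Bx := [set v : 'rV[R]_N | forall i, `[- M, M]%classic (v ord0 i)].
have cBx : compact Bx by apply: (@rV_compact _ _ (fun=> `[- M, M]%classic)) => i; exact: segment_compact.
have -> : Box M = (Bx `*` Bx) `*` `[- M, M]%classic.
  rewrite predeqE => -[[x y] t]; rewrite /Box /hx /hy /ht /=; split.
    move=> [hx1 [hy1 ht1]]; split; [split|] => [i|i|] /=.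
    - by rewrite in_itv /= -ler_norml (ord1 0); apply: hx1.
    - by rewrite in_itv /= -ler_norml (ord1 0); apply: hy1.
    - by rewrite in_itv /= -ler_norml.
  move=> [[/= hx1 hy1] ht1]; split; [|split] => [i|i|].
  - by move: (hx1 i); rewrite /= in_itv /= -ler_norml (ord1 0).
  - by move: (hy1 i); rewrite /= in_itv /= -ler_norml (ord1 0).
  - by move: ht1; rewrite in_itv /= -ler_norml.
by apply: compact_setX => //; [apply: compact_setX|exact: segment_compact].
Qed.

Definition hnA (p : H) := (sqn (hx p) + sqn (hy p)) ^+ 2 + ht p ^+ 2.

Lemma hnA_ge0 p : 0 <= hnA p.
Proof. by rewrite /hnA addr_ge0 // sqr_ge0. Qed.

Lemma pow4K (c : R) : 0 <= c -> (c ^+ 4) `^ (4^-1) = c.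
Proof.
move=> c0; rewrite -powR_mulrn // -powRrM mulfV ?powRr1 //.
Qed.

Lemma hnorm_ge (p : H) c : 0 <= c -> c ^+ 4 <= hnA p -> c <= hnorm p.
Proof.
move=> c0 cA; rewrite -[c]pow4K // /hnorm.
apply: ge0_ler_powR => //; rewrite ?invr_ge0 ?nnegrE ?exprn_ge0 //.
exact: hnA_ge0.
Qed.

Lemma hnorm_le (p : H) c : 0 <= c -> hnA p <= c ^+ 4 -> hnorm p <= c.
Proof.
move=> c0 cA; rewrite -[c]pow4K // /hnorm.
apply: ge0_ler_powR => //; rewrite ?invr_ge0 ?nnegrE ?exprn_ge0 //.
exact: hnA_ge0.
Qed.

Lemma sqr_abs (z : R) : `|z| ^+ 2 = z ^+ 2.
Proof. by rewrite real_normK // num_real. Qed.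

Lemma Wle (p : H) c : 0 <= c -> hnA p <= c ^+ 4 ->
  sqn (hx p) + sqn (hy p) <= c ^+ 2.
Proof.
move=> c0; rewrite /hnA => hA.
have gx := sqn_ge0 (hx p); have gy := sqn_ge0 (hy p).
rewrite -ler_sqr ?nnegrE ?addr_ge0 ?exprn_ge0 //; rewrite -exprM /=.
by apply: le_trans hA; rewrite lerDl sqr_ge0.
Qed.

Lemma coord_le (p : H) c i : 0 <= c -> hnA p <= c ^+ 4 ->
  `|hx p 0 i| <= c /\ `|hy p 0 i| <= c.
Proof.
move=> c0 hA; have W := @Wle p c c0 hA.
have sx := sqn_coord (hx p) i; have sy := sqn_coord (hy p) i.
have gx := sqn_ge0 (hx p); have gy := sqn_ge0 (hy p).
split.
- rewrite -ler_sqr ?nnegrE // sqr_abs; apply: le_trans W.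
  by apply: le_trans sx _; rewrite lerDl.
- rewrite -ler_sqr ?nnegrE // sqr_abs; apply: le_trans W.
  by apply: le_trans sy _; rewrite lerDr.
Qed.

Lemma coord_le_t (p : H) c : 0 <= c -> hnA p <= c ^+ 4 -> `|ht p| <= c ^+ 2.
Proof.
move=> c0; rewrite /hnA => hA.
rewrite -ler_sqr ?nnegrE ?exprn_ge0 // sqr_abs -exprM /=.
by apply: le_trans hA; rewrite lerDr sqr_ge0.
Qed.

Lemma coord_big (q : H) (r : R) : 0 <= r ->
  ((exists i, 1 + 2 * r + 4 * r ^+ 2 < `|hx q 0 i|) \/
   (exists i, 1 + 2 * r + 4 * r ^+ 2 < `|hy q 0 i|) \/
   1 + 2 * r + 4 * r ^+ 2 < `|ht q|) -> 2 * r <= hnorm q.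
Proof.
move=> r0 Hb; have r2 : 0 <= 2 * r by rewrite mulr_ge0.
apply: hnorm_ge => //.
rewrite leNgt; apply/negP => /ltW hA.
case: Hb => [[i Hi]|[[i Hi]|Ht]].
- have [H1 _] := @coord_le q _ i r2 hA.
  have : 2 * r < `|hx q 0 i| by apply: le_lt_trans Hi; nra.
  by rewrite ltNge H1.
- have [_ H1] := @coord_le q _ i r2 hA.
  have : 2 * r < `|hy q 0 i| by apply: le_lt_trans Hi; nra.
  by rewrite ltNge H1.
- have H1 := @coord_le_t q _ r2 hA.
  have : (2 * r) ^+ 2 < `|ht q| by apply: le_lt_trans Ht; nra.
  by rewrite ltNge H1.
Qed.

Lemma near_small (c : H -> R) (p : H) : continuous c ->
  \forall q \near p, `|c p - c q| < 1.
Proof. by move=> cc; apply: ((cvgrPdist_lt _ _).1 (cc p)). Qed.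

Lemma abs_tri (a b : R) : `|a| <= `|a - b| + `|b|.
Proof. by have := ler_normD (a - b) b; rewrite subrK. Qed.

Lemma Dphi_bound (phi : H -> R) (r : R) : 0 < r -> smooth phi ->
  (forall p, 2 * r <= hnorm p -> phi p = 0) -> forall v : H,
  exists Mv, 0 <= Mv /\ forall p, `|'D_v (phi : H -> R^o) p| <= Mv /\
     (~ Box (2 + 2 * r + 4 * r ^+ 2) p -> 'D_v (phi : H -> R^o) p = 0).
Proof.
move=> r0 sm phi0 v.
set MB := 2 + 2 * r + 4 * r ^+ 2.
have [_ cD] := sm 1%N; have cv := cD v; rewrite /= in cv.
have Z : forall p, ~ Box MB p -> 'D_v (phi : H -> R^o) p = 0.
  move=> p nB.
  rewrite (@near_eq_derive _ _ _ (phi : H -> R^o) (cst 0)) ?derive_cst //.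
  move: nB; rewrite /Box /= => /not_andP [/existsNP [i /negP]|
     /not_andP [/existsNP [i /negP]|/negP]]; rewrite -ltNge => Hb.
  - move: (@near_small _ p (cont_hx i)); apply: filterS => q Hq; apply: phi0.
    apply: coord_big; first exact: ltW.
    left; exists i; have := abs_tri (hx p 0 i) (hx q 0 i).
    rewrite /MB in Hb; lra.
  - move: (@near_small _ p (cont_hy i)); apply: filterS => q Hq; apply: phi0.
    apply: coord_big; first exact: ltW.
    right; left; exists i; have := abs_tri (hy p 0 i) (hy q 0 i).
    rewrite /MB in Hb; lra.
  - move: (@near_small _ p cont_ht); apply: filterS => q Hq; apply: phi0.
    apply: coord_big; first exact: ltW.
    right; right; have := abs_tri (ht p) (ht q).
    rewrite /MB in Hb; lra.
have Bne : Box MB !=set0.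
  exists 0; rewrite /Box /hx /hy /ht /=.
  have M0 : 0 <= MB by rewrite /MB; nra.
  by split; [|split] => [i|i|]; rewrite ?mxE normr0.
have cw : {within Box MB, continuous (fun q => `|'D_v (phi : H -> R^o) q|)}.
  apply: continuous_subspaceT => q.
  exact: (continuous_comp (cv q) (@norm_continuous _ _ _)).
have [c cB cmax] := compact_EVT_max Bne (Box_compact MB) cw.
exists `|'D_v (phi : H -> R^o) c|; split => // p; split; last exact: Z.
case: (pselect (Box MB p)) => Bp; first by apply: cmax; rewrite inE.
by rewrite Z // normr0.
Qed.

Lemma mB_bound (m B L : R) : 0 <= m -> 0 < L -> L <= B -> m ^+ 2 <= B ->
  m / B <= 1 + L^-1.
Proof.
move=> m0 L0 LB mB.
have B0 : 0 < B by apply: lt_le_trans LB.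
rewrite ler_pdivrMr //.
have h1 : 1 <= L^-1 * B.
  by rewrite -(mulVf (lt0r_neq0 L0)) ler_wpM2l // invr_ge0 ltW.
case: (lerP m 1) => m1; nra.
Qed.

Lemma pm (x1 x2 y1 y2 : R) : 0 <= x1 -> 0 <= y1 -> x1 <= x2 -> y1 <= y2 -> x1 * y1 <= x2 * y2.
Proof. by move=> *; apply: ler_pM. Qed.

Lemma key (ce E B L EL k m a2 a4 xj yj t phiv Phi Mphi Rb : R) :
  0 <= ce -> 0 <= E -> E <= EL -> 0 < L -> L <= B -> 0 <= m -> m ^+ 2 <= B ->
  0 <= k -> 0 <= a2 -> 0 <= a4 -> `|phiv| <= 1 -> `|Phi| <= Mphi -> 0 <= Rb ->
  (phiv != 0 -> `|xj| <= Rb /\ `|yj| <= Rb /\ `|t| <= Rb) ->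
  `|ce * E * Phi + phiv * (ce * (- k) * (E / B) * (4 * a2 * m * xj + 4 * a4 * yj * t))|
   <= ce * (EL * Mphi + k * EL * (4 * a2 * Rb * (1 + L^-1) + 4 * a4 * Rb ^+ 2 / L)).
Proof.
move=> ce0 E0 EEL L0 LB m0 mB k0 a20 a40 ph1 PhM Rb0 Hc.
have B0 : 0 < B by apply: lt_le_trans LB.
have EL0 : 0 <= EL by apply: le_trans EEL.
have M0 : 0 <= Mphi by apply: le_trans PhM.
set Z := 4 * a2 * Rb * (1 + L^-1) + 4 * a4 * Rb ^+ 2 / L.
have iL0 : 0 <= L^-1 by rewrite invr_ge0 ltW.
have Z0 : 0 <= Z.
  by rewrite /Z addr_ge0 // ?mulr_ge0 ?addr_ge0 // ?exprn_ge0.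
rewrite [X in _ <= X]mulrDr; apply: le_trans (ler_normD _ _) _; apply: lerD.
  rewrite !normrM (ger0_norm ce0) (ger0_norm E0) -mulrA ler_wpM2l //.
  exact: pm.
have [->|phn] := eqVneq phiv 0.
  by rewrite mul0r normr0 !mulr_ge0.
have [hx [hy ht]] := Hc phn.
have iB0 : 0 <= B^-1 by rewrite invr_ge0 ltW.
have iB : B^-1 <= L^-1 by rewrite lef_pV2 ?posrE.
have mBb := @mB_bound m B L m0 L0 LB mB.
have mB0 : 0 <= m / B by rewrite mulr_ge0.
have X0 := normr_ge0 xj; have Y0 := normr_ge0 yj; have T0 := normr_ge0 t.
have comb0 : `|4 * a2 * m * xj + 4 * a4 * yj * t| <=
    4 * a2 * m * `|xj| + 4 * a4 * (`|yj| * `|t|).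
  apply: le_trans (ler_normD _ _) _.
  rewrite !normrM !(ger0_norm m0) !(ger0_norm a20) !(ger0_norm a40) ger0_norm //.
  by rewrite mulrA.
have comb : `|4 * a2 * m * xj + 4 * a4 * yj * t| / B <=
    4 * a2 * `|xj| * (m / B) + 4 * a4 * (`|yj| * `|t|) * B^-1.
  apply: le_trans (ler_wpM2r iB0 comb0) _.
  rewrite mulrDl; apply: lerD; rewrite le_eqVlt; apply/orP; left; apply/eqP; ring.
have comb2 : 4 * a2 * `|xj| * (m / B) + 4 * a4 * (`|yj| * `|t|) * B^-1 <= Z.
  rewrite /Z; apply: lerD.
    apply: pm => //; first by rewrite !mulr_ge0.
    by rewrite ler_wpM2l ?mulr_ge0.
  apply: pm => //; first by rewrite !mulr_ge0.
  rewrite ler_wpM2l ?mulr_ge0 // expr2; exact: pm.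
have EBc : E / B * `|4 * a2 * m * xj + 4 * a4 * yj * t| <= EL * Z.
  rewrite -mulrA [B^-1 * _]mulrC; apply: pm => //.
    by rewrite mulr_ge0.
  exact: le_trans comb comb2.
rewrite normrM; apply: le_trans (ler_piMl _ ph1) _; first exact: normr_ge0.
rewrite !normrM normrN (ger0_norm ce0) (ger0_norm k0) (ger0_norm E0) (ger0_norm iB0).
rewrite -!mulrA ler_wpM2l // ler_wpM2l //; move: EBc; rewrite -!mulrA; exact.
Qed.
Variables (s C0 normU S eps : R).
Definition aa := S `^ (- (2 * s)^-1).
Definition kk := (Qdim R N - 2 * s) / 4.
Definition Bq (p : H) := (aa ^+ 2 * ht p) ^+ 2 +
   (eps ^+ 2 + aa ^+ 2 * (sqn (hx p) + sqn (hy p))) ^+ 2.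

Lemma Ueps_closed (p : H) : 0 < eps ->
  Ueps s C0 normU S eps p =
  C0 / normU * eps `^ ((Qdim R N - 2 * s) / 2) * (Bq p) `^ (- kk).
Proof.
move=> e0.
rewrite /Ueps /ustar /ubar /Ububble /dil /hx /hy /ht /=.
rewrite !sqnZ -/aa.
have -> : (aa ^+ 2 * (eps^-1 ^+ 2 * p.2)) ^+ 2 +
    (1 + aa ^+ 2 * (eps^-1 ^+ 2 * sqn p.1.1) + aa ^+ 2 * (eps^-1 ^+ 2 * sqn p.1.2)) ^+ 2
    = eps `^ (-4) * Bq p.
  rewrite powR_invn ?ltW // /Bq /hx /hy /ht.
  field; exact: lt0r_neq0.
have Bq0 : 0 <= Bq p by rewrite /Bq addr_ge0 // sqr_ge0.
rewrite powRM ?powR_ge0 // -powRrM.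
rewrite -/kk.
have -> : -4 * - kk = 4 * kk by rewrite mulrNN.
rewrite (_ : forall A B C D E : R, A * (C * (B * D) / E) = C / E * (A * B) * D); last by move=> *; ring.
rewrite -powRD; last by apply/implyP => _; exact: lt0r_neq0.
have -> : - ((Qdim R N - 2 * s) / 2) + 4 * kk = (Qdim R N - 2 * s) / 2.
  by rewrite /kk; field.
by [].
Qed.


Definition Pl (p v : H) : {poly R} :=
  ((aa ^+ 2 * ht p)%:P + (aa ^+ 2 * ht v)%:P * 'X) ^+ 2 +
  ((eps ^+ 2 + aa ^+ 2 * (sqn (hx p) + sqn (hy p)))%:P
    + (aa ^+ 2 * 2 * (dotv (hx p) (hx v) + dotv (hy p) (hy v)))%:P * 'X
    + (aa ^+ 2 * (sqn (hx v) + sqn (hy v)))%:P * 'X ^+ 2) ^+ 2.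

Definition dBq (p v : H) : R :=
  2 * (aa ^+ 2 * ht p) * (aa ^+ 2 * ht v) +
  2 * (eps ^+ 2 + aa ^+ 2 * (sqn (hx p) + sqn (hy p))) *
    (aa ^+ 2 * 2 * (dotv (hx p) (hx v) + dotv (hy p) (hy v))).

Lemma Bq_line (p v : H) (h : R) : Bq (h *: v + p) = (Pl p v).[h].
Proof.
rewrite line_eq /Bq /Pl /hx /hy /ht /= !sqn_line !hornerE /=; ring.
Qed.

Lemma Pl0 (p v : H) : (Pl p v).[0] = Bq p.
Proof. by rewrite -Bq_line scale0r add0r. Qed.

Lemma Pl_deriv (p v : H) : (Pl p v)^`().[0] = dBq p v.
Proof.
rewrite /Pl /dBq !expr2 !poly.derivE !hornerE /=; ring.
Qed.


Definition ce := C0 / normU * eps `^ ((Qdim R N - 2 * s) / 2).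

Lemma Bq_gt0 (p : H) : 0 < eps -> 0 < Bq p.
Proof.
move=> e0; rewrite /Bq ltr_wpDl ?sqr_ge0 // exprn_gt0 // ltr_wpDr //.
  by rewrite mulr_ge0 ?sqr_ge0 // addr_ge0 // sqn_ge0.
by rewrite exprn_gt0.
Qed.

Lemma DU (p v : H) : 0 < eps ->
  derivable (Ueps s C0 normU S eps : H -> R^o) p v /\
  'D_v (Ueps s C0 normU S eps : H -> R^o) p =
    ce * ((- kk) * (Bq p) `^ (- kk - 1) * dBq p v).
Proof.
move=> e0.
rewrite Dline Dline_der.
have -> : (fun h : R^o => (Ueps s C0 normU S eps (h *: v + p) : R^o)) =
    (fun h : R^o => (ce * ((Pl p v).[h]) `^ (- kk) : R^o)).
  by apply/funext => h; rewrite Ueps_closed // Bq_line.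
have := @L1 ce (- kk) (Pl p v); rewrite Pl0 Pl_deriv => /(_ (Bq_gt0 p e0)).
by [].
Qed.


Lemma powR_m1 (B k : R) : 0 < B -> B `^ (- k - 1) = B `^ (- k) / B.
Proof.
move=> B0; rewrite powRB ?powRr1 ?ltW //.
by apply/implyP => _; exact: lt0r_neq0.
Qed.

Lemma DuM (phi : H -> R) (p v : H) : 0 < eps -> smooth phi ->
  'D_v (ueps s C0 normU S eps phi) p =
  Ueps s C0 normU S eps p * 'D_v (phi : H -> R^o) p +
  phi p * 'D_v (Ueps s C0 normU S eps : H -> R^o) p.
Proof.
move=> e0 sm.
have [dph _] := sm 1%N.
have dphi : derivable (phi : H -> R^o) p v by apply: diff_derivable; exact: dph.
have [dU _] := DU p v e0.
have -> : ueps s C0 normU S eps phi =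
   ((Ueps s C0 normU S eps : H -> R^o) * (phi : H -> R^o))%R by apply/funext.
by rewrite deriveM.
Qed.


Lemma Xf_eq (phi : H -> R) (p : H) (j : 'I_N) : 0 < eps -> smooth phi ->
  Xf j (ueps s C0 normU S eps phi) p =
  ce * Bq p `^ (- kk) * ('D_(dirx R j) (phi : H -> R^o) p + 2 * hy p 0 j * 'D_(dirt R N) (phi : H -> R^o) p)
  + phi p * (ce * (- kk) * (Bq p `^ (- kk) / Bq p) *
     (4 * aa ^+ 2 * (eps ^+ 2 + aa ^+ 2 * (sqn (hx p) + sqn (hy p))) * hx p 0 j
      + 4 * (aa ^+ 2) ^+ 2 * hy p 0 j * ht p)).
Proof.
move=> e0 sm.
rewrite /Xf !DuM // (DU _ _ e0).2 (DU _ _ e0).2 Ueps_closed // powR_m1 ?Bq_gt0 //.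
rewrite /dBq /= /hx /hy /ht /= dotv_erow !dotv0 -/ce.
ring.
Qed.

Lemma Yf_eq (phi : H -> R) (p : H) (j : 'I_N) : 0 < eps -> smooth phi ->
  Yf j (ueps s C0 normU S eps phi) p =
  ce * Bq p `^ (- kk) * ('D_(diry R j) (phi : H -> R^o) p - 2 * hx p 0 j * 'D_(dirt R N) (phi : H -> R^o) p)
  + phi p * (ce * (- kk) * (Bq p `^ (- kk) / Bq p) *
     (4 * aa ^+ 2 * (eps ^+ 2 + aa ^+ 2 * (sqn (hx p) + sqn (hy p))) * hy p 0 j
      + 4 * (aa ^+ 2) ^+ 2 * (- hx p 0 j) * ht p)).
Proof.
move=> e0 sm.
rewrite /Yf !DuM // (DU _ _ e0).2 (DU _ _ e0).2 Ueps_closed // powR_m1 ?Bq_gt0 //.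
rewrite /dBq /= /hx /hy /ht /= dotv_erow !dotv0 -/ce.
ring.
Qed.


Definition Tc (r rho Mphi : R) :=
  ((aa ^+ 2) ^+ 2 * rho ^+ 4) `^ (- kk) * Mphi +
  kk * ((aa ^+ 2) ^+ 2 * rho ^+ 4) `^ (- kk) *
   (4 * aa ^+ 2 * (2 * r + (2 * r) ^+ 2) * (1 + ((aa ^+ 2) ^+ 2 * rho ^+ 4)^-1)
    + 4 * (aa ^+ 2) ^+ 2 * (2 * r + (2 * r) ^+ 2) ^+ 2 / ((aa ^+ 2) ^+ 2 * rho ^+ 4)).

Lemma kk_ge0 : s < 1 -> 0 <= kk.
Proof.
move=> s1; rewrite /kk divr_ge0 // subr_ge0.
have : (2 : R) <= Qdim R N.
  by rewrite /Qdim -[2 in leLHS]/(2%:R) ler_nat addnC leq_addr.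
lra.
Qed.

Lemma XYbound (phi : H -> R) (r rho Mphi : R) (p : H) (j : 'I_N) :
  0 < eps -> 0 < S -> 0 < C0 -> 0 < normU -> s < 1 -> 0 < r -> 0 < rho ->
  smooth phi -> (forall p, 0 <= phi p <= 1) ->
  (forall p, 2 * r <= hnorm p -> phi p = 0) ->
  `|'D_(dirx R j) (phi : H -> R^o) p + 2 * hy p 0 j * 'D_(dirt R N) (phi : H -> R^o) p| <= Mphi ->
  `|'D_(diry R j) (phi : H -> R^o) p - 2 * hx p 0 j * 'D_(dirt R N) (phi : H -> R^o) p| <= Mphi ->
  rho < hnorm p ->
  `|Xf j (ueps s C0 normU S eps phi) p| <= ce * Tc r rho Mphi /\
  `|Yf j (ueps s C0 normU S eps phi) p| <= ce * Tc r rho Mphi.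
Proof.
move=> e0 S0 C00 n0 s1 r0 rho0 sm phib phi0 PX PY prho.
have a0 : 0 < aa by rewrite /aa powR_gt0.
have a20 : 0 <= aa ^+ 2 by rewrite exprn_ge0 // ltW.
have a40 : 0 <= (aa ^+ 2) ^+ 2 by rewrite exprn_ge0.
have ce0 : 0 <= ce by rewrite /ce mulr_ge0 ?powR_ge0 // divr_ge0 // ltW.
have E0 : 0 <= Bq p `^ (- kk) by rewrite powR_ge0.
set L := (aa ^+ 2) ^+ 2 * rho ^+ 4.
have L0 : 0 < L by rewrite /L mulr_gt0 // exprn_gt0 // exprn_gt0.
have hA : rho ^+ 4 < hnA p.
  rewrite ltNge; apply/negP => h; have := @hnorm_le p _ (ltW rho0) h; lra.
set m := eps ^+ 2 + aa ^+ 2 * (sqn (hx p) + sqn (hy p)).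
have W0 : 0 <= sqn (hx p) + sqn (hy p) by rewrite addr_ge0 // sqn_ge0.
have aW0 : 0 <= aa ^+ 2 * (sqn (hx p) + sqn (hy p)) by rewrite mulr_ge0.
have m0 : 0 <= m by rewrite /m addr_ge0 // exprn_ge0 // ltW.
have mB : m ^+ 2 <= Bq p by rewrite /Bq -/m lerDr sqr_ge0.
have LB : L <= Bq p.
  have mm : (aa ^+ 2 * (sqn (hx p) + sqn (hy p))) ^+ 2 <= m ^+ 2.
    rewrite ler_sqr ?nnegrE // /m lerDr exprn_ge0 // ltW //.
  have : L <= (aa ^+ 2) ^+ 2 * hnA p by rewrite /L ler_wpM2l // ltW.
  move=> h; apply: le_trans h _; rewrite /Bq /hnA -/m.
  apply: le_trans (lerD (lexx _) mm); rewrite le_eqVlt; apply/orP; left; apply/eqP; ring.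
have kk0 := kk_ge0 s1.
have EEL : Bq p `^ (- kk) <= L `^ (- kk).
  rewrite !powRN lef_pV2 ?posrE ?powR_gt0 //; last exact: lt_le_trans LB.
  by apply: ge0_ler_powR; rewrite ?nnegrE // ltW // (lt_le_trans L0 LB).
have ph1 : `|phi p| <= 1.
  by have /andP[h1 h2] := phib p; rewrite ger0_norm.
have Rb0 : 0 <= 2 * r + (2 * r) ^+ 2 by rewrite addr_ge0 ?exprn_ge0 ?mulr_ge0 // ltW.
have Hc : phi p != 0 -> `|hx p 0 j| <= 2 * r + (2 * r) ^+ 2 /\
    `|hy p 0 j| <= 2 * r + (2 * r) ^+ 2 /\ `|ht p| <= 2 * r + (2 * r) ^+ 2.
  move=> phn.
  have r2 : 0 <= 2 * r by rewrite mulr_ge0 // ltW.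
  have hA2 : hnA p <= (2 * r) ^+ 4.
    rewrite leNgt; apply/negP => h; move/eqP: phn; apply; apply: phi0.
    exact: (@hnorm_ge p _ r2 (ltW h)).
  have [h1 h2] := @coord_le p _ j r2 hA2.
  have h3 := @coord_le_t p _ r2 hA2.
  have q0 : 0 <= (2 * r) ^+ 2 by rewrite exprn_ge0.
  split; [|split]; lra.
split.
- rewrite Xf_eq // /Tc -/L -/m.
  exact: (key _ _ _ _ _ _ _ _ _ _ _ _ _ _ _ _ ce0 E0 EEL L0 LB m0 mB kk0 a20 a40 ph1 PX Rb0 Hc).
- rewrite Yf_eq // /Tc -/L -/m.
  apply: (key _ _ _ _ _ _ _ _ _ _ _ _ _ _ _ _ ce0 E0 EEL L0 LB m0 mB kk0 a20 a40 ph1 PY Rb0).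
  by move=> /Hc [h1 [h2 h3]]; rewrite normrN.
Qed.

End S.

Section S.
Variables (R : realType) (N : nat).
Local Notation H := (Heis R N).
Variables (s C0 normU S eps : R).
Local Notation aa := (aa R s S).
Local Notation kk := (kk R N s).
Local Notation Tc := (Tc R N s S).
Lemma Tc_ge0 r rho Mphi : 0 < S -> s < 1 -> 0 < r -> 0 < rho -> 0 <= Mphi ->
  0 <= Tc r rho Mphi.
Proof.
move=> S0 s1 r0 rho0 M0.
have a0 : 0 < aa by rewrite /aa powR_gt0.
have kk0 := @kk_ge0 R N s s1.
have L0 : 0 < (aa ^+ 2) ^+ 2 * rho ^+ 4 by rewrite mulr_gt0 // !exprn_gt0.
have Rb0 : 0 <= 2 * r + (2 * r) ^+ 2 by rewrite addr_ge0 ?exprn_ge0 ?mulr_ge0 // ltW.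
have E0 : 0 <= ((aa ^+ 2) ^+ 2 * rho ^+ 4) `^ (- kk) by exact: powR_ge0.
have i0 : 0 <= ((aa ^+ 2) ^+ 2 * rho ^+ 4)^-1 by rewrite invr_ge0 ltW.
have a2 : 0 <= aa ^+ 2 by rewrite exprn_ge0 // ltW.
have a4 : 0 <= (aa ^+ 2) ^+ 2 by rewrite exprn_ge0.
rewrite /Tc; apply: addr_ge0; first exact: mulr_ge0.
apply: mulr_ge0; first exact: mulr_ge0.
apply: addr_ge0.
  apply: mulr_ge0; last exact: addr_ge0.
  by apply: mulr_ge0 => //; apply: mulr_ge0.
apply: mulr_ge0 => //; apply: mulr_ge0; last exact: exprn_ge0.
exact: mulr_ge0.
Qed.

End S.

Theorem lemma3p8 (R : realType) (N : nat) (s C0 normU S : R)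
  (Omega : set (Heis R N)) (r : R) (phi : Heis R N -> R) (rho : R) :
  (0 < N)%N -> 0 < s -> s < 1 -> 0 < C0 -> 0 < normU -> 0 < S ->
  open Omega -> bounded_set Omega ->
  0 < r -> hball (4 * r) `<=` Omega ->
  smooth phi -> (forall p, 0 <= phi p <= 1) ->
  (forall p, hnorm p < r -> phi p = 1) ->
  (forall p, 2 * r <= hnorm p -> phi p = 0) ->
  0 < rho ->
  exists C : R, 0 < C /\
    forall (eps : R) (p : Heis R N), 0 < eps -> rho < hnorm p ->
      hgrad_norm (ueps s C0 normU S eps phi) p
        <= C * eps `^ ((Qdim R N - 2 * s) / 2).
Proof.
move=> N0 s0 s1 C00 n0 S0 _ _ r0 _ sm phib _ phi0 rho0.
set MB := 2 + 2 * r + 4 * r ^+ 2.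
have MB0 : 0 <= MB by rewrite /MB !addr_ge0 // ?mulr_ge0 ?exprn_ge0 // ltW.
have [f Hf] := choice (@Dphi_bound R N phi r r0 sm phi0).
have f0 : forall v, 0 <= f v by move=> v; case: (Hf v).
set Msum := \sum_(j < N) (f (dirx R j) + f (diry R j)).
have fj : forall j, f (dirx R j) <= Msum /\ f (diry R j) <= Msum.
  move=> j; rewrite /Msum (bigD1 j) //=.
  have : 0 <= \sum_(i < N | i != j) (f (dirx R i) + f (diry R i)).
    by apply: sumr_ge0 => i _; rewrite addr_ge0.
  have := f0 (dirx R j); have := f0 (diry R j); move=> h1 h2 h3; split; lra.
have Msum0 : 0 <= Msum by apply: sumr_ge0 => i _; rewrite addr_ge0.
set Mphi := Msum + 2 * MB * f (dirt R N).
have Mphi0 : 0 <= Mphi by rewrite /Mphi addr_ge0 // !mulr_ge0.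
have ft := Hf (dirt R N).
have PX : forall j p, `|'D_(dirx R j) (phi : Heis R N -> R^o) p +
    2 * hy p 0 j * 'D_(dirt R N) (phi : Heis R N -> R^o) p| <= Mphi.
  move=> j p; have fx := Hf (dirx R j).
  case: (pselect (Box R N MB p)) => Bp; last first.
    by rewrite (fx.2 p).2 // (ft.2 p).2 // mulr0 addr0 normr0.
  have [_ [By _]] := Bp.
  apply: le_trans (ler_normD _ _) _; rewrite /Mphi; apply: lerD.
    exact: le_trans (fx.2 p).1 (fj j).1.
  rewrite !normrM (ger0_norm (ler0n _ 2)) -!mulrA ler_wpM2l //.
  apply: ler_pM => //; exact: (ft.2 p).1.
have PY : forall j p, `|'D_(diry R j) (phi : Heis R N -> R^o) p -
    2 * hx p 0 j * 'D_(dirt R N) (phi : Heis R N -> R^o) p| <= Mphi.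
  move=> j p; have fy := Hf (diry R j).
  case: (pselect (Box R N MB p)) => Bp; last first.
    by rewrite (fy.2 p).2 // (ft.2 p).2 // mulr0 subr0 normr0.
  have [Bx _] := Bp.
  apply: le_trans (ler_normB _ _) _; rewrite /Mphi; apply: lerD.
    exact: le_trans (fy.2 p).1 (fj j).2.
  rewrite !normrM (ger0_norm (ler0n _ 2)) -!mulrA ler_wpM2l //.
  apply: ler_pM => //; exact: (ft.2 p).1.
set T := Tc R N s S r rho Mphi.
have T0 : 0 <= T by exact: Tc_ge0.
have K0 : 0 <= 2 * N%:R * (C0 / normU) * T.
  by rewrite !mulr_ge0 // ?invr_ge0 ltW.
exists (2 * N%:R * (C0 / normU) * T + 1); split.
  exact: (ltr_wpDl K0 ltr01).
move=> eps p e0 prho.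
have XY := fun j => @XYbound R N s C0 normU S eps phi r rho Mphi p j e0 S0 C00 n0 s1
  r0 rho0 sm phib phi0 (PX j p) (PY j p) prho.
set c := ce R N s C0 normU eps.
have c0 : 0 <= c by rewrite /c /ce mulr_ge0 ?powR_ge0 // divr_ge0 // ltW.
have cT0 : 0 <= c * T by rewrite mulr_ge0.
have N1 : 1 <= (N%:R : R) by rewrite ler1n.
have sq : forall z : R, `|z| <= c * T -> z ^+ 2 <= (c * T) ^+ 2.
  by move=> z hz; rewrite -sqr_abs ler_sqr ?nnegrE.
have Sq : \sum_(j < N) ((Xf j (ueps s C0 normU S eps phi) p) ^+ 2 +
    (Yf j (ueps s C0 normU S eps phi) p) ^+ 2) <= (2 * N%:R * (c * T)) ^+ 2.
  set X := (c * T) ^+ 2.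
  apply: (@le_trans _ _ (\sum_(j < N) (X + X))).
    by apply: ler_sum => j _; apply: lerD; [exact: sq (XY j).1|exact: sq (XY j).2].
  rewrite sumr_const card_ord -[(X + X) *+ N]mulr_natl.
  have X0 : 0 <= X by rewrite /X exprn_ge0.
  have -> : (2 * N%:R * (c * T)) ^+ 2 = (4 * N%:R) * (N%:R * X) by rewrite /X; ring.
  have -> : N%:R * (X + X) = 2 * (N%:R * X) by ring.
  apply: ler_wpM2r; first by rewrite mulr_ge0.
  lra.
rewrite /hgrad_norm.
apply: le_trans (_ : Num.sqrt ((2 * N%:R * (c * T)) ^+ 2) <= _).
  rewrite ler_sqrt; [exact: Sq|exact: sqr_ge0].

rewrite sqrtr_sqr ger0_norm; last by apply: mulr_ge0 => //; apply: mulr_ge0.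
rewrite /c /ce.
have -> : 2 * N%:R * (C0 / normU * eps `^ ((Qdim R N - 2 * s) / 2) * T) =
   2 * N%:R * (C0 / normU) * T * eps `^ ((Qdim R N - 2 * s) / 2) by ring.
by rewrite ler_wpM2r ?powR_ge0 // lerDl.
Qed.
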